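(* Let $k$ be a field and let $X$ be a $\mathcal{T}$-space which is locally weakly quasi-compact. Let $F\in\mathrm{Mod}(k_\mathcal{T})$ and let $U\subseteq X$ be open. Then $$\Gamma(U;\rho^{-1}F)\simeq\varprojlim_{V\subset\subset U,\,V\in\mathcal{T}}\Gamma(V;F).$$
   Context: For open subsets $V\subseteq U$ of a topological space $X$, write $V\subset\subset U$ if for every covering $\{U_i\}_{i\in I}$ of $U$ by open sets there is a finite $J\subseteq I$ with $V\subseteq\bigcup_{i\in J}U_i$; $\mathrm{Op}^c(U)$ is the set of such $V$. $X$ is locally weakly quasi-compact if for all open $U,V$: (LWC1) every $x\in U$ has a fundamental system of neighborhoods in $\mathrm{Op}^c(U)$; (LWC2) for $U'\in\mathrm{Op}^c(U)$, $V'\in\mathrm{Op}^c(V)$ one has $U'\cap V'\in\mathrm{Op}^c(U\cap V)$; (LWC3) for every $U'\in\mathrm{Op}^c(U)$ there is $W\in\mathrm{Op}^c(U)$ with $U'\subset\subset W$. Let $\mathcal{T}$ be a family of open subsets of $X$. A $\mathcal{T}$-subset of $X$ is a finite Boolean combination of elements of $\mathcal{T}$; a $\mathcal{T}$-connected subset is a $\mathcal{T}$-subset which is not the disjoint union of two proper $\mathcal{T}$-subsets that are both open and closed in it. $X$ is a $\mathcal{T}$-space if (i) $\mathcal{T}$ is a basis of the topology of $X$ and $\emptyset\in\mathcal{T}$; (ii) $\mathcal{T}$ is closed under finite unions and finite intersections; (iii) every $U\in\mathcal{T}$ has finitely many $\mathcal{T}$-connected components. $X_\mathcal{T}$ is the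 site whose underlying category is $\mathcal{T}$ (morphisms are inclusions), a family $\{U_i\}\subset\mathcal{T}$ of subsets of $U\in\mathcal{T}$ being a covering of $U$ iff it admits a finite subfamily whose union is $U$. $\mathrm{Mod}(k_\mathcal{T})$ (resp. $\mathrm{Mod}(k_X)$) is the category of sheaves of $k$-vector spaces on $X_\mathcal{T}$ (resp. $X$). $\rho:X\to X_\mathcal{T}$ is the natural morphism of sites, $\rho_*F(U)=F(U)$ for $U\in\mathcal{T}$, and $\rho^{-1}:\mathrm{Mod}(k_\mathcal{T})\to\mathrm{Mod}(k_X)$ is the left adjoint of $\rho_*$. *)

(* Defs.v *)
From HB Require Import structures.
From mathcomp Require Import all_boot all_order all_algebra.
From mathcomp Require Import boolp classical_sets functions cardinality topology.
Set Implicit Arguments. Unset Strict Implicit. Unset Printing Implicit Defensive.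
Import GRing.Theory.
Local Open Scope classical_set_scope.
Local Open Scope ring_scope.

Section Defs.
Variable X : topologicalType.

Definition open_covering (U : set X) (I : Type) (Ui : I -> set X) : Prop :=
  (forall i, open (Ui i) /\ Ui i `<=` U) /\ \bigcup_i Ui i = U.

Definition Opc (U V : set X) : Prop :=
  open V /\ V `<=` U /\
  forall (I : Type) (Ui : I -> set X), open_covering U Ui ->
    exists J : set I, finite_set J /\ V `<=` \bigcup_(i in J) Ui i.

Definition locally_weakly_quasi_compact : Prop :=
  (forall U : set X, open U -> forall x, U x ->
     forall N, nbhs x N -> exists W, Opc U W /\ W x /\ W `<=` N) /\
  (forall U V : set X, open U -> open V -> forall U' V',
     Opc U U' -> Opc V V' -> Opc (U `&` V) (U' `&` V')) /\
  (forall U : set X, open U -> forall U', Opc U U' ->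
     exists W, Opc U W /\ Opc W U').

Inductive Tsubset (T : set (set X)) : set X -> Prop :=
| Tsub_base A : T A -> Tsubset T A
| Tsub_compl A : Tsubset T A -> Tsubset T (~` A)
| Tsub_union A B : Tsubset T A -> Tsubset T B -> Tsubset T (A `|` B).

Definition open_in (A B : set X) : Prop := exists O, open O /\ B = O `&` A.
Definition closed_in (A B : set X) : Prop := exists C, closed C /\ B = C `&` A.

Definition Tconnected (T : set (set X)) (A : set X) : Prop :=
  Tsubset T A /\
  ~ (exists B C : set X,
       [/\ Tsubset T B, Tsubset T C, B <> A, C <> A &
       [/\ B `&` C = set0, B `|` C = A,
           open_in A B /\ closed_in A B & open_in A C /\ closed_in A C]]).

Definition Tcomponent (T : set (set X)) (U C : set X) : Prop :=
  [/\ C `<=` U, Tconnected T C, C <> set0 &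
      forall D, Tconnected T D -> C `<=` D -> D `<=` U -> D = C].

Definition Tspace (T : set (set X)) : Prop :=
  [/\ (forall A, T A -> open A),
      (forall U : set X, open U -> forall x, U x -> exists B, [/\ T B, B x & B `<=` U]),
      T set0,
      (forall A B, T A -> T B -> T (A `|` B) /\ T (A `&` B)) &
      (forall U, T U -> finite_set (Tcomponent T U))].

(* Sections are given for every subset of X, but
   only those in P are relevant: all axioms are stated on P. *)
Record presheaf (k : fieldType) (P : set (set X)) := Presheaf {
  sec : set X -> lmodType k;
  res : forall U V : set X, V `<=` U -> sec U -> sec V;
  res_linear : forall U V (h : V `<=` U) (a : k) (s t : sec U),
      res h (a *: s + t) = a *: res h s + res h t;
  res_id : forall U (h : U `<=` U), P U -> forall s, res h s = s;
  res_comp : forall U V W (hVU : V `<=` U) (hWV : W `<=` V) (hWU : W `<=` U),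
      P U -> P V -> P W -> forall s, res hWV (res hVU s) = res hWU s
}.
Arguments sec {k P} p U.
Arguments res {k P} p {U V} h s.

Definition glues (k : fieldType) (P : set (set X)) (F : presheaf k P)
    (U : set X) (I : Type) (Ui : I -> set X) (hi : forall i, Ui i `<=` U) :=
  forall s : forall i, sec F (Ui i),
    (forall i j, res F (@subIsetl _ (Ui i) (Ui j)) (s i)
               = res F (@subIsetr _ (Ui i) (Ui j)) (s j)) ->
    exists t : sec F U, (forall i, res F (hi i) t = s i) /\
      forall t' : sec F U, (forall i, res F (hi i) t' = s i) -> t' = t.

(* sheaves on the site X_T : coverings are families in T admitting a finite
   subfamily whose union is U *)
Definition is_sheaf_T (k : fieldType) (T : set (set X)) (F : presheaf k T) :=
  forall U, T U -> forall (I : Type) (Ui : I -> set X) (hi : forall i, Ui i `<=` U),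
    (forall i, T (Ui i)) ->
    (exists J : set I, finite_set J /\ \bigcup_(i in J) Ui i = U) ->
    glues F hi.

Definition is_sheaf_X (k : fieldType) (F : presheaf k open) :=
  forall U : set X, open U -> forall (I : Type) (Ui : I -> set X)
    (hi : forall i, Ui i `<=` U),
    (forall i, open (Ui i)) -> \bigcup_i Ui i = U ->
    glues F hi.

Definition is_morphism (k : fieldType) (Q P1 P2 : set (set X))
    (F : presheaf k P1) (G : presheaf k P2)
    (phi : forall U, sec F U -> sec G U) : Prop :=
  (forall U, Q U -> forall (a : k) (s t : sec F U),
      phi U (a *: s + t) = a *: phi U s + phi U t) /\
  (forall U V (h : V `<=` U), Q U -> Q V -> forall s,
      phi V (res F h s) = res G h (phi U s)).

Arguments is_morphism {k} Q {P1 P2} F G phi.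

(* (G, eta) is rho^{-1} F : G is a sheaf on X and eta : F -> rho_* G is the
   unit of the adjunction rho^{-1} -| rho_*, i.e. every morphism
   F -> rho_* H (H a sheaf on X) factors uniquely through eta. *)
Definition is_inverse_image (k : fieldType) (T : set (set X))
    (F : presheaf k T) (G : presheaf k open)
    (eta : forall U, sec F U -> sec G U) : Prop :=
  [/\ is_sheaf_X G, is_morphism T F G eta &
  forall (H : presheaf k open), is_sheaf_X H ->
    forall phi : forall U, sec F U -> sec H U, is_morphism T F H phi ->
    exists psi : forall U, sec G U -> sec H U,
      [/\ is_morphism open G H psi,
          (forall U, T U -> forall s, psi U (eta U s) = phi U s) &
          forall psi' : forall U, sec G U -> sec H U,
            is_morphism open G H psi' ->
            (forall U, T U -> forall s, psi' U (eta U s) = phi U s) ->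
            forall U, open U -> forall s, psi' U s = psi U s]].

End Defs.
Arguments sec {X k P} p U.
Arguments res {X k P} p {U V} h s.
Arguments is_morphism {X k} Q {P1 P2} F G phi.
Arguments is_inverse_image {X k T} F G eta.
Arguments is_sheaf_T {X k T} F.
Arguments is_sheaf_X {X k} F.
Arguments Tspace {X} T.
Arguments locally_weakly_quasi_compact X.

(* Main.v *)
Require Import Defs.
From HB Require Import structures.
From mathcomp Require Import all_boot all_order all_algebra.
From mathcomp Require Import boolp classical_sets functions cardinality topology.
Import GRing.Theory.
Local Open Scope classical_set_scope.
Local Open Scope ring_scope.

Set Implicit Arguments. Unset Strict Implicit.

Section Opc.
Variable X : topologicalType.
Implicit Types U V W : set X.

Lemma Opc_open U V : Opc U V -> open V.
Proof. by case. Qed.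
Lemma Opc_sub U V : Opc U V -> V `<=` U.
Proof. by case=> _ []. Qed.

Lemma Opc_mono W' W V : open W' -> W' `<=` W -> Opc W' V -> Opc W V.
Proof.
move=> oW' sW [oV [sV cV]]; split=> //; split; first by move=> x /sV /sW.
move=> I Ui [hUi eU].
have cov : open_covering W' (fun i => Ui i `&` W').
  split=> [i|]; first by split; [apply: openI => //; case: (hUi i)|move=> x []].
  apply/seteqP; split=> [x [i _ []]//|x Wx].
  have : W x by apply: sW.
  by rewrite -eU => -[i _ Uix]; exists i.
have [J [fJ sJ]] := cV I _ cov.
exists J; split=> // x /sJ [i Ji [Uix _]]; by exists i.
Qed.

Lemma Opc_shrink U V V' : Opc U V -> open V' -> V' `<=` V -> Opc U V'.
Proof.
move=> [oV [sV cV]] oV' s; split=> //; split; first by move=> x /s /sV.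
move=> I Ui cov; have [J [fJ sJ]] := cV I Ui cov.
by exists J; split=> // x /s /sJ.
Qed.

Lemma open_covering_open U : (exists I (Ui : I -> set X), open_covering U Ui) -> open U.
Proof.
move=> [I [Ui [hUi eU]]]; rewrite -eU; apply: bigcup_open => i _; by case: (hUi i).
Qed.

Lemma Opc_open_big U V : Opc U V -> open U -> True. Proof. by []. Qed.
End Opc.

Section TS.
Variable X : topologicalType.
Variable T : set (set X).
Hypothesis hT : Tspace T.
Hypothesis hL : locally_weakly_quasi_compact X.
Implicit Types U V W : set X.

Lemma T_open V : T V -> open V. Proof. by case: hT => + _ _ _ _; apply. Qed.
Lemma T0 : T set0. Proof. by case: hT. Qed.
Lemma TU A B : T A -> T B -> T (A `|` B). Proof. by case: hT => _ _ _ h _ a b; case: (h A B a b). Qed.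
Lemma TI A B : T A -> T B -> T (A `&` B). Proof. by case: hT => _ _ _ h _ a b; case: (h A B a b). Qed.

Lemma Tcover W : open W -> forall x, W x -> exists B, [/\ T B, Opc W B & B x].
Proof.
move=> oW x Wx; case: hL => L1 _.
have [O [cO [Ox _]]] := L1 W oW x Wx W (open_nbhs_nbhs (conj oW Wx)).
case: hT => _ hb _ _ _.
have [B [TB Bx sB]] := hb O (Opc_open cO) x Ox.
exists B; split=> //; apply: Opc_shrink cO (T_open TB) sB.
Qed.

Lemma T_bigU (f : set X -> set X) (s : seq (set X)) :
  (forall B, T (f B)) -> T (\big[setU/set0]_(B <- s) f B).
Proof.
move=> hf; elim: s => [|a s IH]; first by rewrite big_nil; exact: T0.
by rewrite big_cons; apply: TU.
Qed.

Lemma interpolate U V' : open U -> Opc U V' ->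
  exists V, [/\ T V, Opc V V' & Opc U V].
Proof.
move=> oU cV'; case: hL => _ [_ L3].
have [W2 [c2 c2']] := L3 U oU V' cV'.
have oW2 := Opc_open c2.
have [W1 [c1 c1']] := L3 W2 oW2 V' c2'.
pose Ui := fun B : set X => if pselect (T B /\ Opc W2 B) then B else set0.
have cov : open_covering W2 Ui.
  split=> [B|].
    rewrite /Ui; destruct (pselect (T B /\ Opc W2 B)) as [[TB cB]|nB].
      by split; [exact: T_open|exact: Opc_sub cB].
    by split=> //; exact: open0.
  apply/seteqP; split=> [x [B _]|x W2x].
    rewrite /Ui; destruct (pselect (T B /\ Opc W2 B)) as [[TB0 cB]|nB]; last by [].
    by move=> Bx; exact: (Opc_sub cB Bx).
  have [B [TB cB Bx]] := Tcover oW2 W2x.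
  exists B => //; rewrite /Ui; destruct (pselect (T B /\ Opc W2 B)) as [yB|nB] => //.
  by case: nB.
have [J [fJ sJ]] := (c1.2.2) _ _ cov.
have [s Js] := (finite_seqP J).1 fJ.
have TV : T (\bigcup_(i in J) Ui i).
  rewrite Js bigcup_seq; apply: T_bigU => B.
  rewrite /Ui; destruct (pselect (T B /\ Opc W2 B)) as [[TB0 cB]|nB] => //; exact: T0.
have sV : \bigcup_(i in J) Ui i `<=` W2.
  move=> x [B _]; rewrite /Ui; destruct (pselect (T B /\ Opc W2 B)) as [[TB0 cB]|nB] => //.
  by move=> Bx; exact: (Opc_sub cB Bx).
exists (\bigcup_(i in J) Ui i); split=> //.
  by apply: Opc_mono (Opc_open c1) sJ c1'.
by apply: Opc_shrink c2 (T_open TV) sV.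
Qed.
End TS.

Section ResLin.
Variables (X : topologicalType) (k : fieldType) (P : set (set X)) (F : presheaf k P).
Lemma resD U V (h : V `<=` U) (s t : sec F U) : res F h (s + t) = res F h s + res F h t.
Proof. by rewrite -[s in LHS]scale1r res_linear scale1r. Qed.
Lemma res0 U V (h : V `<=` U) : res F h 0 = 0.
Proof. by apply: (addrI (res F h 0)); rewrite addr0 -resD addr0. Qed.
Lemma resZ U V (h : V `<=` U) a (s : sec F U) : res F h (a *: s) = a *: res F h s.
Proof. by rewrite -[a *: s]addr0 res_linear res0 addr0. Qed.
Lemma resN U V (h : V `<=` U) (s : sec F U) : res F h (- s) = - res F h s.
Proof. by rewrite -scaleN1r resZ scaleN1r. Qed.
Lemma res_pi U V (h1 h2 : V `<=` U) (s : sec F U) : res F h1 s = res F h2 s.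
Proof. by rewrite (Prop_irrelevance h1 h2). Qed.
End ResLin.

Section HDef.
Variables (k : fieldType) (X : topologicalType) (T : set (set X)) (F : presheaf k T).

Definition idxH (W V : set X) := [/\ open W, T V & Opc W V].

Definition compat W (t : forall V, sec F V) :=
  (forall V, ~ idxH W V -> t V = 0) /\
  (forall V V' (h : V' `<=` V), idxH W V -> idxH W V' -> res F h (t V) = t V').

Definition HW W := {t : forall V, sec F V | compat W t}.

Lemma HW_ext W (t u : HW W) : proj1_sig t = proj1_sig u -> t = u.
Proof.
case: t u => [t ht] [u hu] /= e; subst u; f_equal; exact: Prop_irrelevance.
Qed.

HB.instance Definition _ W := gen_eqMixin (HW W).
HB.instance Definition _ W := gen_choiceMixin (HW W).

Lemma compat0 W : compat W (fun V => 0).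
Proof. by split=> // V V' h _ _; rewrite res0. Qed.
Definition HW0 W : HW W := exist _ _ (compat0 W).

Lemma compatD W (t u : HW W) : compat W (fun V => proj1_sig t V + proj1_sig u V).
Proof.
case: t u => [t [t1 t2]] [u [u1 u2]] /=; split=> [V nV|V V' h iV iV'].
  by rewrite t1 // u1 // addr0.
by rewrite resD t2 // u2.
Qed.
Definition HWadd W (t u : HW W) : HW W := exist _ _ (compatD t u).

Lemma compatN W (t : HW W) : compat W (fun V => - proj1_sig t V).
Proof.
case: t => [t [t1 t2]] /=; split=> [V nV|V V' h iV iV'].
  by rewrite t1 // oppr0.
by rewrite resN t2.
Qed.
Definition HWopp W (t : HW W) : HW W := exist _ _ (compatN t).

Lemma compatZ W a (t : HW W) : compat W (fun V => a *: proj1_sig t V).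
Proof.
case: t => [t [t1 t2]] /=; split=> [V nV|V V' h iV iV'].
  by rewrite t1 // scaler0.
by rewrite resZ t2.
Qed.
Definition HWscale W a (t : HW W) : HW W := exist _ _ (compatZ a t).

Let fe := functional_extensionality_dep.

Lemma HW_addA W : associative (@HWadd W).
Proof. by move=> t u v; apply: HW_ext; apply: fe => V /=; rewrite addrA. Qed.
Lemma HW_addC W : commutative (@HWadd W).
Proof. by move=> t u; apply: HW_ext; apply: fe => V /=; rewrite addrC. Qed.
Lemma HW_add0 W : left_id (HW0 W) (@HWadd W).
Proof. by move=> t; apply: HW_ext; apply: fe => V /=; rewrite add0r. Qed.
Lemma HW_addN W : left_inverse (HW0 W) (@HWopp W) (@HWadd W).
Proof. by move=> t; apply: HW_ext; apply: fe => V /=; rewrite addNr. Qed.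

HB.instance Definition _ W := GRing.isZmodule.Build (HW W) (@HW_addA W) (@HW_addC W) (@HW_add0 W) (@HW_addN W).

Lemma HW_scaleA W a b (t : HW W) : HWscale a (HWscale b t) = HWscale (a * b) t.
Proof. by apply: HW_ext; apply: fe => V /=; rewrite scalerA. Qed.
Lemma HW_scale1 W (t : HW W) : HWscale 1 t = t.
Proof. by apply: HW_ext; apply: fe => V /=; rewrite scale1r. Qed.
Lemma HW_scaleDr W a (t u : HW W) : HWscale a (t + u) = HWscale a t + HWscale a u.
Proof. by apply: HW_ext; apply: fe => V /=; rewrite scalerDr. Qed.
Lemma HW_scaleDl W (t : HW W) a b : HWscale (a + b) t = HWscale a t + HWscale b t.
Proof. by apply: HW_ext; apply: fe => V /=; rewrite scalerDl. Qed.

HB.instance Definition _ W := GRing.Zmodule_isLmodule.Build k (HW W) (@HW_scaleA W) (@HW_scale1 W) (@HW_scaleDr W) (@HW_scaleDl W).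

Definition HWl W : lmodType k := HW W.

Lemma HW_valD W (t u : HW W) V : proj1_sig (t + u) V = proj1_sig t V + proj1_sig u V.
Proof. by []. Qed.
Lemma HW_valZ W a (t : HW W) V : proj1_sig (a *: t) V = a *: proj1_sig t V.
Proof. by []. Qed.
End HDef.

Section HPre.
Variables (k : fieldType) (X : topologicalType) (T : set (set X)) (F : presheaf k T).
Let fe := functional_extensionality_dep.

Lemma idxH_mono W W' V : open W -> W' `<=` W -> idxH T W' V -> idxH T W V.
Proof. by move=> oW s [oW' TV c]; split=> //; apply: Opc_mono c. Qed.

Lemma idxH_sub W V : idxH T W V -> V `<=` W.
Proof. by case=> _ _ /Opc_sub. Qed.

Definition resHf W W' (t : HW F W) : forall V, sec F V :=
  fun V => if pselect (idxH T W' V) then proj1_sig t V else 0.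

Lemma compat_resH W W' (h : W' `<=` W) (t : HW F W) : compat W' (resHf W' t).
Proof.
case: t => [t [t1 t2]]; rewrite /resHf /=; split=> [V nV|V V' s iV iV'].
  by destruct (pselect (idxH T W' V)).
destruct (pselect (idxH T W' V)) as [i1|] => //; destruct (pselect (idxH T W' V')) as [i2|] => //.
destruct (pselect (open W)) as [oW|oW].
  by apply: t2; [exact: (idxH_mono oW h iV)|exact: (idxH_mono oW h iV')].
rewrite t1 ?t1 ?res0 //; by case.
Qed.

Definition resH W W' (h : W' `<=` W) (t : HWl F W) : HWl F W' :=
  exist _ _ (compat_resH h t).

Lemma resH_val W W' (h : W' `<=` W) t V :
  proj1_sig (resH h t) V = if pselect (idxH T W' V) then proj1_sig t V else 0.
Proof. by []. Qed.

Lemma resH_linear U V (h : V `<=` U) (a : k) (s t : HWl F U) :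
  resH h (a *: s + t) = a *: resH h s + resH h t.
Proof.
apply: HW_ext; apply: fe => x; rewrite /= /resHf.
by destruct (pselect (idxH T V x)) => //=; rewrite scaler0 addr0.
Qed.

Lemma resH_id U (h : U `<=` U) : open U -> forall s, resH h s = s.
Proof.
move=> oU [s [s1 s2]]; apply: HW_ext; apply: fe => x; rewrite /= /resHf.
by destruct (pselect (idxH T U x)) as [|n] => //; rewrite s1.
Qed.

Lemma resH_comp U V W (hVU : V `<=` U) (hWV : W `<=` V) (hWU : W `<=` U) :
  open U -> open V -> open W -> forall s, resH hWV (resH hVU s) = resH hWU s.
Proof.
move=> oU oV oW s; apply: HW_ext; apply: fe => x; rewrite /= /resHf.
destruct (pselect (idxH T W x)) as [iW|] => //.
rewrite resH_val; destruct (pselect (idxH T V x)) as [iV|n]; first by []. by exfalso; apply: n; exact: (idxH_mono oV hWV iW).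
Qed.

Definition Hp : presheaf k (@open X) := Presheaf resH_linear resH_id resH_comp.

End HPre.

Section HSheaf.
Variables (k : fieldType) (X : topologicalType) (T : set (set X)) (F : presheaf k T).
Hypothesis hT : Tspace T.
Hypothesis hL : locally_weakly_quasi_compact X.
Hypothesis hF : is_sheaf_T F.
Let fe := functional_extensionality_dep.

Variables (W : set X) (I : Type) (Ui : I -> set X) (hi : forall i, Ui i `<=` W).
Hypotheses (oW : open W) (oUi : forall i, open (Ui i)) (eU : \bigcup_i Ui i = W).
Variable s : forall i, HWl F (Ui i).
Hypothesis hs : forall i j, res (Hp F) (@subIsetl _ (Ui i) (Ui j)) (s i)
                          = res (Hp F) (@subIsetr _ (Ui i) (Ui j)) (s j).

Let sv i := proj1_sig (s i).
Lemma sv0 i V : ~ idxH T (Ui i) V -> sv i V = 0.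
Proof. by rewrite /sv; case: (s i) => t [t1 t2] /=; apply: t1. Qed.
Lemma svr i V V' (h : V' `<=` V) : idxH T (Ui i) V -> idxH T (Ui i) V' -> res F h (sv i V) = sv i V'.
Proof. by rewrite /sv; case: (s i) => t [t1 t2] /=; apply: t2. Qed.

Lemma sv_eq i j D : T D -> Opc (Ui i `&` Ui j) D -> sv i D = sv j D.
Proof.
move=> TD cD; have := congr1 (fun t => proj1_sig t D) (hs i j).
rewrite /= /resHf /=.
by destruct (pselect (idxH T (Ui i `&` Ui j) D)) as [|n] => //; case: n; split=> //; apply: openI.
Qed.

Definition J := {p : I * set X | T p.2 /\ Opc (Ui p.1) p.2}.

Lemma Jcover V : idxH T W V ->
  exists J0 : set J, finite_set J0 /\ \bigcup_(p in J0) ((sval p).2 `&` V) = V.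
Proof.
move=> [_ TV cV].
have cov : open_covering W (fun p : J => (sval p).2).
  split=> [[[i a] [Ta ca]]|] /=.
    split; first exact: (T_open hT Ta). by move=> x ax; exact: (hi (Opc_sub ca ax)).
  apply/seteqP; split=> [x [[[i a] [Ta ca]]] _ /= ax|x Wx].
    by apply: hi i _ (Opc_sub ca ax).
  move: Wx; rewrite -eU => -[i _ Uix].
  have [B [TB cB Bx]] := Tcover hT hL (oUi i) Uix.
  by exists (exist _ (i, B) (conj TB cB)).
have [J0 [fJ sJ]] := cV.2.2 _ _ cov.
exists J0; split=> //; apply/seteqP; split=> [x [p _ []]//|x Vx].
by have [p Jp px] := sJ x Vx; exists p.
Qed.

Lemma key (p q : J) D (hD : D `<=` (sval p).2) (hD' : D `<=` (sval q).2) : T D ->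
  res F hD (sv (sval p).1 (sval p).2) = res F hD' (sv (sval q).1 (sval q).2).
Proof.
case: p hD => [[i a] [Ta ca]] /= hD; case: q hD' => [[j b] [Tb cb]] /= hD' TD.
have Tab := TI hT Ta Tb.
have cab : Opc (Ui i `&` Ui j) (a `&` b).
  by case: hL => _ [L2 _]; apply: L2.
have sDab : D `<=` a `&` b by move=> x Dx; split; [exact: hD|exact: hD'].
rewrite -(res_comp (@subIsetl _ a b) sDab hD Ta Tab TD).
rewrite -(res_comp (@subIsetr _ a b) sDab hD' Tb Tab TD).
congr (res F _ _).
have ia : idxH T (Ui i) a by split.
have ib : idxH T (Ui j) b by split.
have iab : idxH T (Ui i) (a `&` b).
  by split=> //; apply: Opc_shrink ca (T_open hT Tab) _; apply: subIsetl.
have iab' : idxH T (Ui j) (a `&` b).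
  by split=> //; apply: Opc_shrink cb (T_open hT Tab) _; apply: subIsetr.
rewrite (svr _ ia iab) (svr _ ib iab').
exact: sv_eq.
Qed.

Definition sfam V (p : J) : sec F ((sval p).2 `&` V) :=
  res F (@subIsetl _ (sval p).2 V) (sv (sval p).1 (sval p).2).

Lemma glueV V : idxH T W V ->
  exists u : sec F V, (forall p : J, res F (@subIsetr _ (sval p).2 V) u = sfam V p) /\
     (forall u', (forall p : J, res F (@subIsetr _ (sval p).2 V) u' = sfam V p) -> u' = u).
Proof.
move=> iV; have [_ TV _] := iV.
have TJ : forall p : J, T ((sval p).2 `&` V).
  move=> [[i a] [Ta ca]] /=; apply: TI => //; by case: iV.
have := hF TV (fun p : J => @subIsetr _ (sval p).2 V) TJ (Jcover iV).
apply.
move=> p q; rewrite /sfam.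
have Tp := TJ p; have Tq := TJ q; have Tpq := TI hT Tp Tq.
have Ta : T (sval p).2 by case: p {Tp Tpq} => [[i a] []].
have Tb : T (sval q).2 by case: q {Tq Tpq} => [[i a] []].
have hp : (sval p).2 `&` V `&` ((sval q).2 `&` V) `<=` (sval p).2 by move=> x [[]].
have hq : (sval p).2 `&` V `&` ((sval q).2 `&` V) `<=` (sval q).2 by move=> x [_ []].
rewrite (res_comp _ _ hp Ta Tp Tpq) (res_comp _ _ hq Tb Tq Tpq).
exact: key.
Qed.

Definition tt V : sec F V :=
  match pselect (idxH T W V) with
  | left iV => sval (cid (glueV iV))
  | right _ => 0
  end.

Lemma tt_prop V : idxH T W V -> forall p : J, res F (@subIsetr _ (sval p).2 V) (tt V) = sfam V p.
Proof.
move=> iV; rewrite /tt; destruct (pselect (idxH T W V)) as [iV'|n]; last by [].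
by case: (cid (glueV iV')) => u [].
Qed.

Lemma tt_char V : idxH T W V -> forall u,
  (forall p : J, res F (@subIsetr _ (sval p).2 V) u = sfam V p) -> tt V = u.
Proof.
move=> iV u hu; rewrite /tt; destruct (pselect (idxH T W V)) as [iV'|n]; last by [].
by case: (cid (glueV iV')) => u0 [p0 q0] /=; rewrite (q0 u hu).
Qed.


Lemma tt0 V : ~ idxH T W V -> tt V = 0.
Proof. by move=> n; rewrite /tt; destruct (pselect (idxH T W V)). Qed.

Lemma tt_compat : compat W tt.
Proof.
split=> [V nV|V V' h iV iV']; first exact: tt0.
symmetry; apply: (tt_char iV') => p.
have [_ TV cV] := iV; have [_ TV' cV'] := iV'.
have Ta : T (sval p).2 by case: p => [[i a] []].
have TaV := TI hT Ta TV; have TaV' := TI hT Ta TV'.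
have X1 : (sval p).2 `&` V' `<=` V by move=> x [_ /h].
have hh : (sval p).2 `&` V' `<=` (sval p).2 `&` V by move=> x [ax /h Vx].
rewrite (res_comp h (@subIsetr _ (sval p).2 V') X1 TV TV' TaV').
rewrite -(res_comp (@subIsetr _ (sval p).2 V) hh X1 TV TaV TaV').
rewrite (tt_prop iV) /sfam.
rewrite (res_comp (@subIsetl _ (sval p).2 V) hh (@subIsetl _ (sval p).2 V') Ta TaV TaV').
by [].
Qed.

Definition ttH : HWl F W := exist _ tt tt_compat.

Lemma tt_res (i : I) : resH (@hi i) ttH = s i.
Proof.
apply: HW_ext; apply: fe => V; rewrite /= /resHf.
destruct (pselect (idxH T (Ui i) V)) as [iV|nV]; last by rewrite -/(sv i) sv0.
have iWV : idxH T W V := idxH_mono oW (@hi i) iV.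
have [_ TV cV] := iV.
rewrite -/(sv i); apply: (tt_char iWV) => -[[j b] [Tb cb]] /=.
rewrite /sfam /=.
have TbV := TI hT Tb TV.
have ibV : idxH T (Ui i) (b `&` V).
  by split=> //; apply: Opc_shrink cV (T_open hT TbV) _; apply: subIsetr.
have ib : idxH T (Ui j) b by split.
have ibV' : idxH T (Ui j) (b `&` V).
  by split=> //; apply: Opc_shrink cb (T_open hT TbV) _; apply: subIsetl.
rewrite (svr _ iV ibV) (svr _ ib ibV').
apply: sv_eq => //.
have : Opc (Ui i `&` Ui j) (V `&` b) by case: hL => _ [L2 _]; apply: L2.
by rewrite [V `&` b]setIC.
Qed.

Lemma tt_uniq (t' : HWl F W) : (forall i, resH (@hi i) t' = s i) -> t' = ttH.
Proof.
move=> ht; apply: HW_ext; apply: fe => V /=.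
destruct (pselect (idxH T W V)) as [iV|nV]; last first.
  by rewrite tt0 //; case: (t') => u [u1 u2] /=; apply: u1.
symmetry; apply: (tt_char iV) => -[[j b] [Tb cb]] /=.
rewrite /sfam /=.
have [_ TV cV] := iV.
have TbV := TI hT Tb TV.
have ibVW : idxH T W (b `&` V).
  by split=> //; apply: Opc_shrink cV (T_open hT TbV) _; apply: subIsetr.
have ib : idxH T (Ui j) b by split.
have ibV' : idxH T (Ui j) (b `&` V).
  by split=> //; apply: Opc_shrink cb (T_open hT TbV) _; apply: subIsetl.
have e := congr1 (fun u : HW F (Ui j) => proj1_sig u (b `&` V)) (ht j).
move: e; rewrite /= /resHf.
destruct (pselect (idxH T (Ui j) (b `&` V))) as [_i|n]; last by [].
rewrite -/(sv j) -(svr _ ib ibV') => <-.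
by case: (t') iV ibVW => u [u1 u2] /= iV0 i1; apply: u2.
Qed.

End HSheaf.

Lemma H_sheaf (k : fieldType) (X : topologicalType) (T : set (set X)) (F : presheaf k T) :
  Tspace T -> locally_weakly_quasi_compact X -> is_sheaf_T F -> is_sheaf_X (Hp F).
Proof.
move=> hT hL hF W oW I Ui hi oUi eU s hs.
exists (ttH hT hL hF hi oUi eU hs); split.
  by move=> i; exact: (tt_res hT hL hF hi oW oUi eU hs i).
move=> t' ht; apply: tt_uniq => //.
Qed.

Section Phi.
Variables (k : fieldType) (X : topologicalType) (T : set (set X)) (F : presheaf k T).
Hypothesis hT : Tspace T.
Let fe := functional_extensionality_dep.

Definition phif W (s : sec F W) : forall V, sec F V := fun V =>
  match pselect (T W /\ idxH T W V) with
  | left p => res F (idxH_sub p.2) s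
  | right _ => 0 end.

Lemma phif_val W (s : sec F W) V (h : V `<=` W) : T W -> idxH T W V -> phif s V = res F h s.
Proof.
move=> TW iV; rewrite /phif; destruct (pselect (T W /\ idxH T W V)) as [p|n].
  exact: res_pi.
by case: n.
Qed.

Lemma compat_phi W (s : sec F W) : compat W (phif s).
Proof.
split=> [V nV|V V' h iV iV'].
  by rewrite /phif; destruct (pselect (T W /\ idxH T W V)) as [[TW0 i]|n].
rewrite /phif; destruct (pselect (T W /\ idxH T W V)) as [[TW i]|n]; last first.
  destruct (pselect (T W /\ idxH T W V')) as [[TW i]|n']; last by rewrite res0.
  by case: n.
destruct (pselect (T W /\ idxH T W V')) as [[TW' i']|n']; last by case: n'.
have [_ TV _] := iV; have [_ TV' _] := iV'.
exact: (res_comp _ h _ TW TV TV').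
Qed.

Definition phi W (s : sec F W) : sec (Hp F) W := exist _ _ (compat_phi s).

Lemma phi_morph : is_morphism T F (Hp F) phi.
Proof.
split=> [U TU a s t|U V h TU TV s].
  apply: HW_ext; apply: fe => x /=; rewrite /phif.
  destruct (pselect (T U /\ idxH T U x)) as [p|n].
    by rewrite res_linear.
  by rewrite scaler0 addr0.
apply: HW_ext; apply: fe => x /=; rewrite /resHf.
destruct (pselect (idxH T V x)) as [iV|n] => /=.
  have iU : idxH T U x := idxH_mono (T_open hT TU) h iV.
  rewrite (phif_val _ (idxH_sub iV)) // (phif_val _ (idxH_sub iU)) //.
  have [_ TVx _] := iV; exact: (res_comp h _ _ TU TV TVx).
rewrite /phif; destruct (pselect (T V /\ idxH T V x)) as [[TW0 i]|n'] => //.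
Qed.
End Phi.

Section Chi.
Variables (k : fieldType) (X : topologicalType) (T : set (set X)) (F : presheaf k T).
Variables (G : presheaf k (@open X)) (eta : forall U, sec F U -> sec G U).
Hypothesis hT : Tspace T.
Hypothesis hL : locally_weakly_quasi_compact X.
Hypothesis hG : is_sheaf_X G.
Hypothesis etam : is_morphism T F G eta.

Definition K W := {V : set X | T V /\ Opc W V}.
Definition Kh W (p : K W) : sval p `<=` W := Opc_sub (proj2 (svalP p)).

Lemma Kcover W : open W -> \bigcup_(p : K W) sval p = W.
Proof.
move=> oW; apply/seteqP; split=> [x [p _ px]|x Wx]; first exact: Kh px.
have [B [TB cB Bx]] := Tcover hT hL oW Wx.
by exists (exist _ B (conj TB cB)).
Qed.

Definition sc W (t : HWl F W) (p : K W) : sec G (sval p) :=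
  @eta (sval p) (proj1_sig t (sval p)).

Lemma glueK W (oW : open W) (t : HWl F W) :
  exists u : sec G W, (forall p : K W, res G (@Kh W p) u = sc t p) /\
     (forall u', (forall p : K W, res G (@Kh W p) u' = sc t p) -> u' = u).
Proof.
have opn : forall p : K W, open (sval p).
  by move=> [V [TV cV]]; exact: (T_open hT TV).
apply: (hG oW (@Kh W) opn (Kcover oW)).
move=> [V [TV cV]] [V' [TV' cV']] /=; rewrite /sc /=.
have TVV := TI hT TV TV'.
rewrite -(etam.2 _ _ _ TV TVV) -(etam.2 _ _ _ TV' TVV).
case: t => t [t1 t2] /=.
have iV : idxH T W V by split.
have iV' : idxH T W V' by split.
have iVV : idxH T W (V `&` V').
  by split=> //; apply: Opc_shrink cV (T_open hT TVV) _; apply: subIsetl.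
by rewrite (t2 _ _ _ iV iVV) (t2 _ _ _ iV' iVV).
Qed.

Definition chif W (t : sec (Hp F) W) : sec G W :=
  match pselect (open W) with
  | left oW => sval (cid (glueK oW t))
  | right _ => 0 end.

Lemma chi_prop W (t : HWl F W) V (h : V `<=` W) : open W -> T V -> Opc W V ->
  res G h (@chif W t) = @eta V (proj1_sig t V).
Proof.
move=> oW TV cV; rewrite /chif; destruct (pselect (open W)) as [oW'|n]; last by [].
case: (cid (glueK oW' t)) => u [p1 p2] /=.
have := p1 (exist _ V (conj TV cV)); rewrite /sc /= => <-.
exact: res_pi.
Qed.

Lemma chi_char W (t : HWl F W) u : open W ->
  (forall V (h : V `<=` W), T V -> Opc W V -> res G h u = @eta V (proj1_sig t V)) ->
  @chif W t = u.
Proof.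
move=> oW hu; rewrite /chif; destruct (pselect (open W)) as [oW'|n]; last by [].
case: (cid (glueK oW' t)) => u0 [p1 p2] /=.
by symmetry; apply: p2 => -[V [TV cV]]; rewrite /sc /=; apply: hu.
Qed.

Lemma chi_morph : is_morphism (@open X) (Hp F) G chif.
Proof.
split=> [U oU a s t|U V h oU oV s].
  apply: chi_char => // V h TV cV.
  rewrite res_linear !chi_prop //.
  by rewrite (etam.1 _ TV).
apply: chi_char => // W h' TW cW.
have cWU : Opc U W := Opc_mono oV h cW.
rewrite (res_comp h h' (subset_trans h' h) oU oV (T_open hT TW)).
rewrite chi_prop //= /resHf.
by destruct (pselect (idxH T V W)) as [iW|n] => //; case: n.
Qed.
End Chi.
Unset Implicit Arguments. Set Strict Implicit.
Theorem mainTheorem8 (k : fieldType) (X : topologicalType) (T : set (set X))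
    (F : presheaf k T) (G : presheaf k open)
    (eta : forall U, sec F U -> sec G U) (U : set X) :
  Tspace T -> locally_weakly_quasi_compact X ->
  is_sheaf_T F -> is_inverse_image F G eta -> open U ->
  let idx := fun V => T V /\ Opc U V in
  exists Phi : sec G U -> forall V, sec F V,
    [/\ (forall (a : k) (x y : sec G U) V, idx V ->
           Phi (a *: x + y) V = a *: Phi x V + Phi y V),
        (forall x V W (h : W `<=` V), idx V -> idx W ->
           res F h (Phi x V) = Phi x W),
        (forall x y, (forall V, idx V -> Phi x V = Phi y V) -> x = y),
        (forall t : forall V, sec F V,
           (forall V W (h : W `<=` V), idx V -> idx W -> res F h (t V) = t W) ->
           exists x, forall V, idx V -> Phi x V = t V) &
        (forall x V (h : V `<=` U), idx V -> eta V (Phi x V) = res G h x)].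
Proof.
move=> hT hL hF [hG etam UP] oU idx.
have fe := functional_extensionality_dep.
have Hs : is_sheaf_X (Hp F) := H_sheaf hT hL hF.
have phim := phi_morph F hT.
have chim := chi_morph hT hL hG etam.
pose chi := @chif k X T F G eta hT hL hG etam.
have [psi [psim psie psiu]] := UP (Hp F) Hs (@phi k X T F) phim.
have [psi0 [_ _ u0]] := UP G hG eta etam.
have m1 : is_morphism open G G (fun W x => chi W (psi W x)).
  split=> [W oW a x y|W V h oW oV x] /=.
    by rewrite psim.1 // /chi chim.1.
  by rewrite psim.2 // /chi chim.2.
have e1 : forall W, T W -> forall s, chi W (psi W (eta W s)) = eta W s.
  move=> W TW s; rewrite psie //; apply: (chi_char hT hL hG etam (T_open hT TW)).
  move=> V h TV cV; rewrite -(etam.2 _ _ h TW TV).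
  have iV : idxH T W V by split=> //; exact: (T_open hT TW).
  by rewrite /= (phif_val s h TW iV).
have m2 : is_morphism open G G (fun W x => x) by [].
have cp : forall W, open W -> forall x, chi W (psi W x) = x.
  move=> W oW x.
  have a1 := u0 _ m1 e1 W oW x; have a2 := u0 _ m2 (fun W TW s => erefl) W oW x.
  by simpl in a1, a2; rewrite a1 -a2.
have z : forall W (t : HW F W) V, ~ idxH T W V -> proj1_sig t V = 0.
  by move=> W [t [t1 t2]] V /= /t1.
exists (fun x V => proj1_sig (psi U x) V); split.
- by move=> a x y V iV /=; rewrite psim.1.
- move=> x V W h [TV cV] [TW cW]; case: (psi U x) => t [t1 t2] /=.
  by apply: t2; split.
- move=> x y hxy; rewrite -(cp U oU x) -(cp U oU y); congr (chi U _).
  apply: HW_ext; apply: fe => V.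
  destruct (pselect (idxH T U V)) as [[oU' TV cV]|n].
    by apply: hxy; split.
  by rewrite !z.
- move=> t ht.
  have ct : compat U (fun V => if pselect (idxH T U V) then t V else 0).
    split=> [V nV|V V' h iV iV'].
      by destruct (pselect (idxH T U V)).
    destruct (pselect (idxH T U V)) as [iV0|n]; last by case: n.
    destruct (pselect (idxH T U V')) as [iV0'|n]; last by case: n.
    by case: iV => _ TV cV; case: iV' => _ TV' cV'; apply: ht; split.
  pose t' : HWl F U := exist _ _ ct.
  exists (chi U t') => V [TV cV].
  have [V1 [TV1 c1 cU1]] := interpolate hT hL oU cV.
  have oV1 := T_open hT TV1.
  have iV : idxH T V1 V by split.
  transitivity (proj1_sig (res (Hp F) (Opc_sub cU1) (psi U (chi U t'))) V).
    rewrite /= /resHf; destruct (pselect (idxH T V1 V)) as [i|n] => //.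
  rewrite -(psim.2 U V1 (Opc_sub cU1) oU oV1).
  rewrite (chi_prop hT hL hG etam t' (Opc_sub cU1) oU TV1 cU1) psie //.
  rewrite /= (phif_val _ (Opc_sub c1) TV1 iV) /=.
  destruct (pselect (idxH T U V1)) as [i1|n]; last by case: n.
  by apply: ht; split.
- move=> x V h [TV cV].
  have := chi_prop hT hL hG etam (psi U x) h oU TV cV.
  by rewrite -/chi cp // => ->.
Qed.
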